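(* Let $q$ be a power of a prime $p$ and $n\ge 0$ an integer, and assume $F_n(1,x)$ is a permutation polynomial of $\mathbb{F}_q$. If $p=2$, then $3\mid n$. If $p$ is odd, then $n\not\equiv 1,2\pmod 6$.
   Context: For an integer $n\ge 1$, the $n$-th reversed Dickson polynomial of the third kind is $F_n(a,x)=\sum_{i=0}^{\lfloor n/2\rfloor}\frac{n-2i}{n-i}\binom{n-i}{i}(-x)^i a^{n-2i}$, where each coefficient $\frac{n-2i}{n-i}\binom{n-i}{i}$ is an integer (read in $\mathbb{F}_q$), and $F_0(a,x)=0$. A polynomial $f\in\mathbb{F}_q[x]$ is a permutation polynomial of $\mathbb{F}_q$ if $c\mapsto f(c)$ is a bijection of $\mathbb{F}_q$. *)

(* Defs.v *)
From HB Require Import structures.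
From mathcomp Require Import all_boot all_order all_algebra all_field.
Set Implicit Arguments. Unset Strict Implicit. Unset Printing Implicit Defensive.
Import GRing.Theory.
Local Open Scope ring_scope.

(* The integer coefficient (n-2i)/(n-i) * C(n-i,i), for n >= 1 and i <= n/2
   (computed exactly in nat: the division is exact). *)
Definition rdickson3_coef (n i : nat) : nat :=
  (((n - i.*2) * 'C(n - i, i)) %/ (n - i))%N.

(* n-th reversed Dickson polynomial of the third kind F_n(a, x), as a
   polynomial in x with parameter a; F_0 = 0. *)
Definition rdickson3 (R : nzRingType) (n : nat) (a : R) : {poly R} :=
  if n == 0%N then 0 else
  \sum_(i < n./2.+1)
     ((rdickson3_coef n i)%:R * a ^+ (n - i.*2)) *: (- 'X) ^+ i.

Definition is_perm_poly (F : finFieldType) (f : {poly F}) : Prop :=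
  bijective (fun c : F => f.[c]).

(* Main.v *)
Require Import Defs.
From HB Require Import structures.
From mathcomp Require Import all_boot all_order all_algebra all_field.
From mathcomp Require Import zify ring.
Set Implicit Arguments. Unset Strict Implicit. Unset Printing Implicit Defensive.
Import GRing.Theory.
Local Open Scope ring_scope.

Definition T (R : nzRingType) (K m : nat) : R :=
  \sum_(0 <= i < K) (-1) ^+ i * ('C(m - i, i))%:R.

Definition A (R : nzRingType) (K m : nat) : R :=
  \sum_(0 <= i < K) (-1) ^+ i * ('C(m - i, i.+1))%:R.

Lemma binS' m j : 'C(m.+1 - j, j.+1) = ('C(m - j, j.+1) + 'C(m - j, j))%N.
Proof.
case: (leqP j m) => h; first by rewrite subSn // binS.
rewrite (_ : m.+1 - j = 0)%N; last lia.
rewrite (_ : m - j = 0)%N; last lia.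
rewrite !bin0n; case: j h => //.
Qed.

Lemma T_rec1 (R : nzRingType) k m : T R k.+1 m.+1 = 1 - A R k m.
Proof.
rewrite /T /A big_nat_recl // subn0 bin0 expr0 mulr1 -sumrN.
congr (_ + _); apply: eq_bigr => j _.
by rewrite subSS exprS mulN1r mulNr.
Qed.

Lemma T_rec2 (R : nzRingType) k m : T R k.+1 m.+2 = T R k.+1 m.+1 - T R k m.
Proof.
rewrite [in RHS]T_rec1 /T /A big_nat_recl // subn0 bin0 expr0 mulr1.
rewrite -addrA; congr (_ + _).
rewrite -!sumrN -big_split /=; apply: eq_bigr => j _.
rewrite subSS binS' natrD exprS mulN1r !mulNr mulrDr.
by rewrite opprD.
Qed.

Definition v (R : nzRingType) (m : nat) : R :=
  match (m %% 6)%N with 0 | 1 => 1 | 3 | 4 => -1 | _ => 0 end.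

Lemma v_rec (R : nzRingType) m : v R m.+2 = v R m.+1 - v R m.
Proof.
rewrite /v -(addn2 m) -(addn1 m) -modnDml -(modnDml m 1).
have : (m %% 6 < 6)%N by rewrite ltn_mod.
case: (m %% 6)%N => [|[|[|[|[|[|r]]]]]] //= _; rewrite ?subrr ?opprK ?subr0 ?sub0r //.
by rewrite add0r.
Qed.

Lemma T_v (R : nzRingType) m : forall K, (m < K.*2)%N -> T R K m = v R m.
Proof.
move: m.
have H : forall m : nat, (forall K, (m < K.*2)%N -> T R K m = v R m) /\
                   (forall K, (m.+1 < K.*2)%N -> T R K m.+1 = v R m.+1).
  elim => [|m [IH1 IH2]].
    split => [[|k]|[|k]] //= _.
      rewrite /T big_nat_recl // big1 ?addr0 ?bin0 ?mulr1 //.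
      by move=> i _; rewrite bin0n /= mulr0.
    rewrite T_rec1 /A big1 ?subr0 //.
    by move=> i _; rewrite sub0n bin0n /= mulr0.
  split => // [[|k]] //= hk.
  rewrite T_rec2 IH2; last by rewrite doubleS; lia.
  rewrite IH1; last by rewrite doubleS in hk; lia.
  by rewrite v_rec.
move=> m K; case: (H m) => h _; apply: h.
Qed.

Lemma coef_eq n i : (0 < n)%N -> (i <= n./2)%N ->
  rdickson3_coef n i = 'C((n - i).-1, i).
Proof.
move=> n0 hi; rewrite /rdickson3_coef -addnn subnDA -mul_bin_down mulKn //.
have : (n./2 < n)%N by rewrite -divn2 ltn_Pdiv.
lia.
Qed.

Lemma eval_F (F : fieldType) n (c : F) : (0 < n)%N ->
  (rdickson3 n (1 : F)).[c] =
  \sum_(i < n./2.+1) ('C((n - i).-1, i))%:R * (- c) ^+ i.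
Proof.
move=> n0; rewrite /rdickson3 (negbTE (lt0n_neq0 n0)) horner_sum.
apply: eq_bigr => i _.
rewrite hornerZ horner_exp hornerN hornerX expr1n mulr1 coef_eq //.
by rewrite -ltnS.
Qed.

Theorem theorem3p1 (F : finFieldType) (p n : nat) :
  p \in [pchar F] ->
  is_perm_poly (rdickson3 n (1 : F)) ->
  (p = 2%N -> (3 %| n)%N) /\
  (odd p -> (n %% 6 != 1)%N /\ (n %% 6 != 2)%N).
Proof.
move=> hp [g fg _].
have inj : injective (fun c : F => (rdickson3 n (1 : F)).[c]) by apply: can_inj fg.
clear fg; case: n inj => [|m] inj; first by split => // _; rewrite mod0n.
have e0 : (rdickson3 m.+1 (1 : F)).[0] = 1.
  rewrite eval_F // big_ord_recl /= bin0 expr0 mulr1 big1 ?addr0 //.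
  by move=> i _; rewrite oppr0 expr0n /= mulr0.
have e1 : (rdickson3 m.+1 (1 : F)).[1] = v F m.
  rewrite eval_F // -(@T_v F m (m.+1./2.+1)); last first.
    rewrite doubleS; have := odd_double_half m.+1; case: (odd _) => /=; lia.
  rewrite /T big_mkord; apply: eq_bigr => i _.
  rewrite mulrC.
  by rewrite subSKn.
have hv : v F m != 1.
  apply/negP => /eqP h.
  have : (0 : F) = 1 by apply: inj; rewrite /= e0 e1 h.
  by move/esym/eqP; rewrite oner_eq0.
have hv' : p = 2%N -> v F m != -1.
  move=> p2; apply/negP => /eqP h; move: hv.
  have h2 : (2%:R : F) = 0 by move: hp; rewrite p2 => /andP [_ /eqP].
  have : (-1 : F) = 1.
    by apply/eqP; rewrite -subr_eq0 -opprD -(natrD F 1 1) h2 oppr0.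
  by rewrite h => ->; rewrite eqxx.
move: hv hv'; rewrite /v.
have : (m %% 6 < 6)%N by rewrite ltn_mod.
have hm : ((m.+1) %% 6 = ((m %% 6).+1) %% 6)%N by rewrite -addn1 -modnDml addn1.
have h3 : (3 %| m.+1)%N = (((m %% 6).+1 %% 6) %% 3 == 0)%N.
  by rewrite /dvdn -(modn_dvdm m.+1 (isT : (3 %| 6)%N)) hm.
rewrite h3 hm.
case: (m %% 6)%N => [|[|[|[|[|[|r]]]]]] //= _; rewrite ?eqxx //.
Qed.
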